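(* Let $P$ be a program. If one of the following holds: (a) every transaction of $P$ contains a single instruction, which is either a read or a write; (b) every transaction of $P$ contains only reads/writes that access a single shared variable (different transactions may access different variables); (c) there is a shared variable $x$ such that every transaction of $P$ contains a write to $x$; then $P$ is robust against snapshot isolation.
   Context: A program is a parallel composition of processes, each executing a sequence of transactions; a transaction is a sequence of instructions delimited by begin and commit, each instruction being a read $r:=x$ of a shared variable into a process-local register, a write $x:=e$ of a register expression into a shared variable, or $\mathtt{assume}(b)$ for a Boolean expression $b$ over registers. Under snapshot isolation (SI), when a transaction begins it takes a local snapshot of the central memory; its reads and writes access only this snapshot, and it can commit (copying its writes to the central memory) only if no transaction that committed after its begin wrote to a variable it writes to. Under serializability, transactions execute atomically. Traces abstract executions as issue and commit events of transactions together with the dependency relations program order, write-read, store order (write-write) and conflict (read-write). $P$ is robust against SI iff the set of traces of SI executions of $P$ equals the set of traces of serializable executions of $P$. *)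

(* Defs.v *)
From mathcomp Require Import all_boot.
Set Implicit Arguments. Unset Strict Implicit. Unset Printing Implicit Defensive.

Definition val := nat.
Definition var := nat.
Definition reg := nat.
Definition regfile := reg -> val.

(* register expressions / Boolean expressions over registers are arbitrary
   functions of the register valuation *)
Inductive instr :=
| IRead (r : reg) (x : var)
| IWrite (x : var) (e : regfile -> val)
| IAssume (b : regfile -> bool).

Definition transaction := seq instr.
Definition process := seq transaction.
Definition program := seq process.

(* transaction identifier: (process index, index of transaction in process) *)
Definition tid := (nat * nat)%type.

Inductive event := EvRead (x : var) (v : val) | EvWrite (x : var) (v : val).

(* a committed transaction, as recorded in the commit log *)
Record entry := Entry {
  ce_tid : tid;
  ce_events : seq event;
  ce_rf : seq (var * option tid);         (* non-local reads: variable and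
                                             writer read from (None = initial) *)
  ce_writes : seq (var * val) }.

Definition writes_var (e : entry) (x : var) : bool := x \in map fst (ce_writes e).

(* central memory obtained from a commit log (initial value 0) *)
Definition mem_of (log : seq entry) (x : var) : val :=
  foldl (fun v e => last v [seq p.2 | p <- ce_writes e & p.1 == x]) 0 log.

Definition last_writer (log : seq entry) (x : var) : option tid :=
  foldl (fun acc e => if writes_var e x then Some (ce_tid e) else acc) None log.

Definition upd_reg (rg : regfile) (r : reg) (v : val) : regfile :=
  fun r' => if r' == r then v else rg r'.

(* local execution of a transaction on a snapshot [snap] (whose last writers are
   given by [lw]); reads of variables already written by the transaction are
   local.  Returns None if an assume fails (the transaction blocks). *)
Fixpoint run (t : transaction) (rg : regfile) (snap : var -> val)
  (lw : var -> option tid) (ws : seq (var * val)) (evs : seq event)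
  (rf : seq (var * option tid))
  : option (regfile * seq (var * val) * seq event * seq (var * option tid)) :=
  match t with
  | [::] => Some (rg, ws, evs, rf)
  | IRead r x :: t' =>
      let loc := [seq p <- ws | p.1 == x] in
      let v := if loc is _ :: _ then (last (x, 0) loc).2 else snap x in
      let rf' := if loc is _ :: _ then rf else rcons rf (x, lw x) in
      run t' (upd_reg rg r v) snap lw ws (rcons evs (EvRead x v)) rf'
  | IWrite x e :: t' =>
      let v := e rg in
      run t' rg snap lw (rcons ws (x, v)) (rcons evs (EvWrite x v)) rf
  | IAssume b :: t' => if b rg then run t' rg snap lw ws evs rf else None
  end.

(* a running (begun, not yet committed) transaction *)
Record active := Active {
  act_start : nat;                 (* size of the commit log at begin *)
  act_regs : regfile;
  act_writes : seq (var * val);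
  act_events : seq event;
  act_rf : seq (var * option tid) }.

Record state := State {
  st_pc : nat -> nat;              (* index of the next transaction of process p *)
  st_regs : nat -> regfile;
  st_act : nat -> option active;
  st_log : seq entry }.

Definition init_state : state :=
  State (fun _ => 0) (fun _ _ => 0) (fun _ => None) [::].

Definition upd {A : Type} (f : nat -> A) (p : nat) (a : A) : nat -> A :=
  fun q => if q == p then a else f q.

Inductive label := LBegin (p : nat) | LCommit (p : nat).

Inductive step (P : program) : state -> label -> state -> Prop :=
| StepBegin s p rg ws evs rf :
    p < size P -> st_act s p = None ->
    st_pc s p < size (nth [::] P p) ->
    run (nth [::] (nth [::] P p) (st_pc s p)) (st_regs s p)
        (mem_of (st_log s)) (last_writer (st_log s)) [::] [::] [::]
      = Some (rg, ws, evs, rf) ->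
    step P s (LBegin p)
      (State (st_pc s) (st_regs s)
         (upd (st_act s) p (Some (Active (size (st_log s)) rg ws evs rf)))
         (st_log s))
| StepCommit s p a :
    st_act s p = Some a ->
    (* SI commit check: no transaction committed since the begin wrote a
       variable written by this transaction *)
    all (fun e => all (fun x => ~~ writes_var e x) (map fst (act_writes a)))
        (drop (act_start a) (st_log s)) ->
    step P s (LCommit p)
      (State (upd (st_pc s) p (st_pc s p).+1) (upd (st_regs s) p (act_regs a))
         (upd (st_act s) p None)
         (rcons (st_log s)
            (Entry (p, st_pc s p) (act_events a) (act_rf a) (act_writes a)))).

Inductive steps (P : program) : state -> seq label -> state -> Prop :=
| steps_nil s : steps P s [::] s
| steps_cons s l s' ls s'' :
    step P s l s' -> steps P s' ls s'' -> steps P s (l :: ls) s''.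

Definition si_exec (P : program) (ls : seq label) (s : state) : Prop :=
  steps P init_state ls s.

(* serializable executions: every transaction executes atomically *)
Definition ser_exec (P : program) (ls : seq label) (s : state) : Prop :=
  steps P init_state ls s /\
  exists ps : seq nat, ls = flatten [seq [:: LBegin p; LCommit p] | p <- ps].

Record trace := Trace {
  tr_com : tid -> bool;
  tr_ev : tid -> seq event;
  tr_po : tid -> tid -> bool;
  tr_wr : var -> tid -> tid -> bool;
  tr_ww : var -> tid -> tid -> bool;
  tr_rw : var -> tid -> tid -> bool }.

Definition find_entry (log : seq entry) (t : tid) : option entry :=
  ohead [seq e <- log | ce_tid e == t].
Definition pos_in (log : seq entry) (t : tid) : nat :=
  find (fun e => ce_tid e == t) log.
Definition committed (log : seq entry) (t : tid) : bool := t \in map ce_tid log.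
Definition wx (log : seq entry) (x : var) (t : tid) : bool :=
  if find_entry log t is Some e then writes_var e x else false.

Definition po_of (log : seq entry) (t1 t2 : tid) : bool :=
  [&& committed log t1, committed log t2, t1.1 == t2.1 & t1.2 < t2.2].
Definition wr_of (log : seq entry) (x : var) (t1 t2 : tid) : bool :=
  if find_entry log t2 is Some e then (x, Some t1) \in ce_rf e else false.
Definition ww_of (log : seq entry) (x : var) (t1 t2 : tid) : bool :=
  [&& wx log x t1, wx log x t2 & pos_in log t1 < pos_in log t2].
Definition rw_of (log : seq entry) (x : var) (t1 t2 : tid) : bool :=
  [&& t1 != t2, wx log x t2 &
      if find_entry log t1 is Some e then
        has (fun p => (p.1 == x) &&
                      (if p.2 is Some w then ww_of log x w t2 else true)) (ce_rf e)
      else false].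
Definition ev_of (log : seq entry) (t : tid) : seq event :=
  if find_entry log t is Some e then ce_events e else [::].

Definition trace_of (s : state) : trace :=
  let log := st_log s in
  Trace (committed log) (ev_of log) (po_of log) (wr_of log) (ww_of log) (rw_of log).

Definition Tr_SI (P : program) (T : trace) : Prop :=
  exists ls s, si_exec P ls s /\ trace_of s = T.
Definition Tr_SER (P : program) (T : trace) : Prop :=
  exists ls s, ser_exec P ls s /\ trace_of s = T.

Definition robust_SI (P : program) : Prop := forall T, Tr_SI P T <-> Tr_SER P T.

Definition all_tx (P : program) (Q : transaction -> Prop) : Prop :=
  forall p i, p < size P -> i < size (nth [::] P p) -> Q (nth [::] (nth [::] P p) i).

Definition single_rw_instr (t : transaction) : Prop :=
  match t with
  | [:: IRead _ _] | [:: IWrite _ _] => True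
  | _ => False
  end.

Definition instr_var (i : instr) : option var :=
  match i with IRead _ x | IWrite x _ => Some x | IAssume _ => None end.

Definition single_var_tx (t : transaction) : Prop :=
  exists x : var, all (fun i => if instr_var i is Some y then y == x else true) t.

Definition writes_to (x : var) (t : transaction) : Prop :=
  has (fun i => if i is IWrite y _ then y == x else false) t.

(* Main.v *)
Require Import Defs.
From mathcomp Require Import all_boot zify.
From Stdlib Require Import FunctionalExtensionality.
Set Implicit Arguments. Unset Strict Implicit.


Definition onvar (x : var) (i : instr) : bool :=
  if instr_var i is Some y then y == x else true.

Lemma run_ws_mono x t rg snap lw ws evs rf rg' ws' evs' rf' :
  run t rg snap lw ws evs rf = Some (rg', ws', evs', rf') ->
  (x \in map fst ws) || has (fun i => if i is IWrite y _ then y == x else false) t -> x \in map fst ws'.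
Proof.
elim: t rg ws evs rf => [|i t IH] rg ws evs rf /=.
  by case=> _ <- _ _; rewrite orbF.
case: i => [r y|y e|b] /=.
- move=> H Hx; exact: (IH _ _ _ _ H Hx).
- move=> H Hx; apply: (IH _ _ _ _ H).
  rewrite map_rcons mem_rcons in_cons.
  move: Hx; case: (y =P x) => [->|_] /=; first by rewrite eqxx orbT.
  by case/orP=> ->; rewrite ?orbT.
- by case: (b rg) => // H Hx; exact: (IH _ _ _ _ H Hx).
Qed.

Lemma run_ws_var x t rg snap lw ws evs rf rg' ws' evs' rf' :
  run t rg snap lw ws evs rf = Some (rg', ws', evs', rf') ->
  all (onvar x) t -> all (fun p => p.1 == x) ws -> all (fun p => p.1 == x) ws'.
Proof.
elim: t rg ws evs rf => [|i t IH] rg ws evs rf /=.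
  by case=> _ <- _ _.
case: i => [r y|y e|b] /=.
- by move=> H /andP[_ Ht] Hw; exact: (IH _ _ _ _ H Ht Hw).
- move=> H /andP[Hy Ht] Hw; apply: (IH _ _ _ _ H Ht).
  by rewrite all_rcons /= Hw andbT; exact: Hy.
- by case: (b rg) => // H Ht Hw; exact: (IH _ _ _ _ H Ht Hw).
Qed.

Lemma run_dep x t rg snap lw snap' lw' ws evs rf :
  all (onvar x) t -> snap x = snap' x -> lw x = lw' x ->
  run t rg snap lw ws evs rf = run t rg snap' lw' ws evs rf.
Proof.
move=> + Hs Hl.
elim: t rg ws evs rf => [|i t IH] rg ws evs rf //=.
case: i => [r y|y e|b] /=.
- by case/andP=> /eqP -> Ht; rewrite Hs Hl IH.
- by case/andP=> _ Ht; rewrite IH.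
- by move=> Ht; rewrite IH.
Qed.

Definition wrt (e : entry) : bool := ce_writes e != [::].

Lemma mem_of_filter L x : mem_of L x = mem_of (filter wrt L) x.
Proof.
rewrite /mem_of; elim: L 0 => [|e L IH] v //=.
rewrite /wrt; case: (ce_writes e =P [::]) => [E|_] /=; last exact: IH.
by rewrite IH E.
Qed.

Lemma last_writer_filter L x : last_writer L x = last_writer (filter wrt L) x.
Proof.
rewrite /last_writer; elim: L None => [|e L IH] v //=.
rewrite /wrt /writes_var; case: (ce_writes e =P [::]) => [E|_] /=; last exact: IH.
by rewrite IH E.
Qed.

Lemma filter_nowrite (ws : seq (var * Defs.val)) x :
  x \notin map fst ws -> [seq p <- ws | p.1 == x] = [::].
Proof.
elim: ws => [|[y v] ws IH] //=; rewrite in_cons negb_or => /andP[Hy Hx].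
by rewrite eq_sym (negbTE Hy) IH.
Qed.

Lemma mem_of_cat_nw L1 L2 x : all (fun e => ~~ writes_var e x) L2 ->
  mem_of (L1 ++ L2) x = mem_of L1 x /\ last_writer (L1 ++ L2) x = last_writer L1 x.
Proof.
rewrite /mem_of /last_writer !foldl_cat.
elim: L2 (foldl _ 0 L1) (foldl _ None L1) => [|e L IH] v w //= /andP[He HL].
by rewrite (negbTE He) filter_nowrite //=; apply: IH.
Qed.


Definition e0 := Entry (0,0) [::] [::] [::].
Definition tx (P : program) (t : tid) := nth [::] (nth [::] P t.1) t.2.
Definition isp (p : nat) (e : entry) : bool := (ce_tid e).1 == p.
Definition prevregs (RO : tid -> regfile) (t : tid) : regfile :=
  if t.2 is i.+1 then RO (t.1, i) else (fun _ => 0).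

Variant entry_ok P (L : seq entry) (B : nat -> nat) (RO : tid -> regfile) k e : Prop :=
  EntryOk of (ce_tid e).1 < size P
   & (ce_tid e).2 < size (nth [::] P (ce_tid e).1)
   & (ce_tid e).2 = count (isp (ce_tid e).1) (take k L)
   & B k <= k
   & (forall j, j < k -> isp (ce_tid e).1 (nth e0 L j) -> j < B k)
   & run (tx P (ce_tid e)) (prevregs RO (ce_tid e)) (mem_of (take (B k) L))
        (last_writer (take (B k) L)) [::] [::] [::]
        = Some (RO (ce_tid e), ce_writes e, ce_events e, ce_rf e)
   & all (fun e' => all (fun x => ~~ writes_var e' x) (map fst (ce_writes e)))
          (drop (B k) (take k L)).

Definition act_ok P (L : seq entry) p pc regs a :=
  [/\ p < size P, pc < size (nth [::] P p), act_start a <= size L,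
      (forall j, j < size L -> isp p (nth e0 L j) -> j < act_start a) &
      run (tx P (p, pc)) regs (mem_of (take (act_start a) L))
        (last_writer (take (act_start a) L)) [::] [::] [::]
        = Some (act_regs a, act_writes a, act_events a, act_rf a)].

Definition INV P s := exists B RO,
  (forall k, k < size (st_log s) -> entry_ok P (st_log s) B RO k (nth e0 (st_log s) k)) /\
  (forall p, st_pc s p = count (isp p) (st_log s)) /\
  (forall p, st_regs s p = prevregs RO (p, st_pc s p)) /\
  (forall p a, st_act s p = Some a -> act_ok P (st_log s) p (st_pc s p) (st_regs s p) a).

Lemma count_take_lt p L k : k < size L -> isp p (nth e0 L k) ->
  count (isp p) (take k L) < count (isp p) L.
Proof.
move=> Hk Hp.
have: count (isp p) (take k.+1 L) <= count (isp p) L.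
  by rewrite -{2}(cat_take_drop k.+1 L) count_cat leq_addr.
by rewrite (take_nth e0 Hk) -cats1 count_cat /= Hp addn1.
Qed.

Lemma take_rcons_le (L : seq entry) e k : k <= size L -> take k (rcons L e) = take k L.
Proof. by move=> Hk; rewrite -cats1 takel_cat. Qed.

Lemma INV_init P : INV P init_state.
Proof.
exists (fun _ => 0), (fun _ _ => 0); split => //=.
Qed.

Lemma INV_step P s l s' : INV P s -> step P s l s' -> INV P s'.
Proof.
move=> HI Hst; case: Hst HI => [s0 p rg ws evs rf Hp Ha Hpc0 Hrun | s0 p a Ha Hchk];
  case=> B [RO [HE [Hpc [Hrg Hact]]]].
- exists B, RO; split => //=; split => //; split => //.
  move=> q a'; rewrite /upd; case: (q =P p) => [->|Hq].
    by case=> <-; split => //=; rewrite take_size.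
  exact: Hact.
- move: HE Hpc Hrg Hact Hchk; set L := st_log s0; move=> HE Hpc Hrg Hact Hchk.
  set n := size L.
  set e := Entry (p, st_pc s0 p) (act_events a) (act_rf a) (act_writes a).
  have [HP Hpc1 Hst Hlt Hrun] := Hact _ _ Ha.
  have Hold : forall k, k < n -> (ce_tid (nth e0 L k)).1 = p ->
      (ce_tid (nth e0 L k)).2 < st_pc s0 p.
    move=> k Hk Hq; have [_ _ -> _ _ _ _] := HE k Hk.
    by rewrite Hq Hpc; apply: count_take_lt => //; rewrite /isp Hq.
  exists (fun k => if k == n then act_start a else B k),
         (fun t => if t == (p, st_pc s0 p) then act_regs a else RO t).
  split => /=.
    move=> k; rewrite size_rcons ltnS leq_eqVlt => /orP[/eqP ->|Hk].
      have T1 : take n (rcons L e) = L by rewrite take_rcons_le // take_size.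
      have T2 : take (act_start a) (rcons L e) = take (act_start a) L.
        by rewrite take_rcons_le.
      rewrite nth_rcons ltnn eqxx /=.
      split; rewrite /= ?eqxx ?T1 ?T2 //.
      + move=> j Hj; rewrite nth_rcons Hj; exact: Hlt.
      + rewrite /prevregs /=; case E: (st_pc s0 p) => [|c] /=.
          by rewrite -Hrun Hrg E.
        rewrite xpair_eqE eqxx /= (_ : (c == c.+1) = false); last by apply: ltn_eqF.
        by rewrite -Hrun Hrg E.
    have Hkn : k < n by [].
    have [H1 H2 H3 H4 H5 H6 H7] := HE k Hk.
    have T1 : take k (rcons L e) = take k L by rewrite take_rcons_le // ltnW.
    have T2 : take (B k) (rcons L e) = take (B k) L.
      by rewrite take_rcons_le //; apply: leq_trans H4 (ltnW Hk).
    rewrite nth_rcons Hk.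
    have Hne : forall i, i <= (ce_tid (nth e0 L k)).2 ->
        ((ce_tid (nth e0 L k)).1, i) == (p, st_pc s0 p) = false.
      move=> i Hi; rewrite xpair_eqE; case: (_ =P p) => //= Hq.
      by apply/negbTE; rewrite neq_ltn (leq_ltn_trans Hi (Hold _ Hk Hq)).
    have Ekn : (k == n) = false by rewrite ltn_eqF.
    split; rewrite /= ?Ekn ?T1 ?T2 //.
    + move=> j Hj; rewrite nth_rcons (ltn_trans Hj Hk); exact: H5.
    + have N1 := Hne _ (leqnn _); rewrite -surjective_pairing in N1.
      rewrite N1 /prevregs; move: H6 N1 Hne.
      case: (ce_tid (nth e0 L k)) => [q i] /= H6 N1 Hne.
      case: i H6 N1 Hne => [|i] H6 N1 Hne /=; first exact: H6.
      by rewrite (Hne i (leqnSn _)); exact: H6.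
  split.
    move=> q; rewrite /upd -cats1 count_cat /= Hpc /isp /=.
    case: (q =P p) => [->|/eqP Hq]; first by rewrite eqxx addn0 addn1.
    case: eqP => [E|_]; first by move: Hq; rewrite E eqxx.
    by rewrite /= !addn0 Hpc.
  split.
    move=> q; rewrite /upd; case: (q =P p) => [->|Hq].
      by rewrite /prevregs /= eqxx.
    rewrite Hrg /prevregs; case: (st_pc s0 q) => [|c] //=.
    by rewrite xpair_eqE; case: (q =P p).
  move=> q a'; rewrite /upd; case: (q =P p) => // Hq Ha'.
  have [H1 H2 H3 H4 H5] := Hact _ _ Ha'.
  split => //.
  + by rewrite size_rcons ltnW.
  + move=> j; rewrite size_rcons ltnS leq_eqVlt nth_rcons => /orP[/eqP ->|Hj].
      by rewrite ltnn eqxx /isp /= => /eqP Hpq; case: Hq.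
    rewrite Hj; exact: H4.
  + by rewrite take_rcons_le.
Qed.

Lemma INV_steps P s ls s' : INV P s -> steps P s ls s' -> INV P s'.
Proof.
move=> H Hs; elim: Hs H => // s0 l s1 ls0 s2 Hst _ IH H.
apply: IH; exact: INV_step H Hst.
Qed.


Variant ser_ok_at P (L : seq entry) (RO : tid -> regfile) k e : Prop :=
  SerOk of (ce_tid e).1 < size P
   & (ce_tid e).2 < size (nth [::] P (ce_tid e).1)
   & (ce_tid e).2 = count (isp (ce_tid e).1) (take k L)
   & run (tx P (ce_tid e)) (prevregs RO (ce_tid e)) (mem_of (take k L))
        (last_writer (take k L)) [::] [::] [::]
        = Some (RO (ce_tid e), ce_writes e, ce_events e, ce_rf e).

Definition ser_ok P L RO := forall k, k < size L -> ser_ok_at P L RO k (nth e0 L k).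

Lemma steps_snoc P s ls s1 l s2 :
  steps P s ls s1 -> step P s1 l s2 -> steps P s (rcons ls l) s2.
Proof.
elim=> [s0|s0 l0 s' ls0 s'' H _ IH] Hs /=.
  by apply: steps_cons Hs (steps_nil _ _).
by apply: steps_cons H (IH Hs).
Qed.

Lemma ser_build P L RO : ser_ok P L RO -> forall n, n <= size L ->
  exists ps s, steps P init_state (flatten [seq [:: LBegin p; LCommit p] | p <- ps]) s
    /\ st_log s = take n L /\ (forall p, st_pc s p = count (isp p) (take n L))
    /\ (forall p, st_regs s p = prevregs RO (p, st_pc s p))
    /\ (forall p, st_act s p = None).
Proof.
move=> HS; elim=> [|n IH] Hn.
  by exists [::], init_state; rewrite take0; split; [constructor|split].
have Hn' : n < size L by [].
have [ps [s [Hst [Hlog [Hpc [Hrg Hact]]]]]] := IH (ltnW Hn').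
have [] := HS n Hn'.
case Ee: (nth e0 L n) => [[p i] evs rf ws] /= H1 H2 H3 H4.
pose A := Active (size (st_log s)) (RO (p, i)) ws evs rf.
have Hpcp : st_pc s p = i by rewrite Hpc H3.
have S1 : step P s (LBegin p)
   (State (st_pc s) (st_regs s) (upd (st_act s) p (Some A)) (st_log s)).
  apply: StepBegin => //; first by rewrite Hpcp.
  by rewrite Hpcp Hrg Hpcp Hlog; exact: H4.
set s1 := State _ _ _ _ in S1.
have S2 : step P s1 (LCommit p)
   (State (upd (st_pc s1) p (st_pc s1 p).+1) (upd (st_regs s1) p (act_regs A))
         (upd (st_act s1) p None)
         (rcons (st_log s1) (Entry (p, st_pc s1 p) (act_events A) (act_rf A) (act_writes A)))).
  apply: StepCommit => /=; first by rewrite /upd eqxx.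
  by rewrite drop_size.
exists (rcons ps p), (State (upd (st_pc s1) p (st_pc s1 p).+1) (upd (st_regs s1) p (act_regs A))
         (upd (st_act s1) p None)
         (rcons (st_log s1) (Entry (p, st_pc s1 p) (act_events A) (act_rf A) (act_writes A)))).
split.
  rewrite map_rcons flatten_rcons -cat_rcons cats1.
  exact: steps_snoc (steps_snoc Hst S1) S2.
rewrite /= Hpcp Hlog (take_nth e0 Hn') Ee.
split => //.
split.
  move=> q; rewrite /upd -cats1 count_cat /= Hpc /isp /=.
  case: (q =P p) => [->|/eqP Hq]; first by rewrite eqxx /= addn1 H3.
  case: eqP => [E|_]; first by move: Hq; rewrite E eqxx.
  by rewrite /= !addn0.
split.
  move=> q; rewrite /upd; case: (q =P p) => [->|Hq] //=.
by move=> q; rewrite /upd; case: (q =P p).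
Qed.

Lemma ser_exists P L RO : ser_ok P L RO -> exists ls s, ser_exec P ls s /\ st_log s = L.
Proof.
move=> HS; have [ps [s [Hst [Hlog _]]]] := ser_build HS (leqnn (size L)).
exists (flatten [seq [:: LBegin p; LCommit p] | p <- ps]), s.
by rewrite Hlog take_size; split => //; split => //; exists ps.
Qed.


Definition ckey (L : seq entry) (B : nat -> nat) j :=
  if wrt (nth e0 L j) then (2 * j).+1 else 2 * B j.
Definition ltk L B : rel nat := fun j k =>
  (ckey L B j < ckey L B k) || ((ckey L B j == ckey L B k) && (j < k)).
Definition lek L B : rel nat := fun j k =>
  (ckey L B j < ckey L B k) || ((ckey L B j == ckey L B k) && (j <= k)).
Definition ord L B := sort (lek L B) (iota 0 (size L)).
Definition Wk (L : seq entry) (B : nat -> nat) k := if wrt (nth e0 L k) then k else B k.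

Lemma ltk_trans L B : transitive (ltk L B).
Proof.
move=> k j l; rewrite /ltk.
move=> /orP[H1|/andP[/eqP E1 H1]] /orP[H2|/andP[/eqP E2 H2]]; apply/orP.
- by left; lia.
- by left; lia.
- by left; lia.
- by right; apply/andP; split; [apply/eqP|]; lia.
Qed.

Lemma ltk_irr L B : irreflexive (ltk L B).
Proof. by move=> j; rewrite /ltk ltnn ltnn andbF. Qed.

Lemma ltk_asym L B j k : ltk L B j k -> ltk L B k j = false.
Proof.
move=> H; apply/negbTE/negP => H'.
by have := ltk_trans H H'; rewrite ltk_irr.
Qed.

Lemma lek_total L B : total (lek L B).
Proof.
move=> j k; rewrite /lek.
case: (ltngtP (ckey L B j) (ckey L B k)) => //= _; exact: leq_total.
Qed.

Lemma lek_ltk L B j k : lek L B j k -> j != k -> ltk L B j k.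
Proof.
rewrite /lek /ltk => /orP[->//|/andP[-> H]] Hn /=.
by rewrite (ltn_neqAle j k) Hn H orbT.
Qed.

Lemma ord_perm L B : perm_eq (ord L B) (iota 0 (size L)).
Proof. by rewrite /ord perm_sort. Qed.

Lemma ord_uniq L B : uniq (ord L B).
Proof. by rewrite (perm_uniq (ord_perm L B)) iota_uniq. Qed.

Lemma path_lt L B x s : path (lek L B) x s -> uniq (x :: s) -> path (ltk L B) x s.
Proof.
elim: s x => [|y s IH] x //= /andP[Hxy Hp] /andP[Hx Hu].
rewrite lek_ltk //=; last by move: Hx; rewrite in_cons negb_or => /andP[].
exact: IH.
Qed.

Lemma ord_sorted L B : sorted (ltk L B) (ord L B).
Proof.
have := ord_uniq L B; have := sort_sorted (lek_total L B) (iota 0 (size L)).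
rewrite -/(ord L B); case: (ord L B) => [|x s] //= Hp Hu.
exact: path_lt.
Qed.

Lemma take_pairwise (r : rel nat) s m :
  irreflexive r -> (forall a b, r a b -> r b a = false) -> pairwise r s ->
  m < size s -> take m s = filter (r ^~ (nth 0 s m)) s.
Proof.
move=> Hirr Has Hpw Hm; set k := nth 0 s m.
have E : s = take m s ++ k :: drop m.+1 s by rewrite -drop_nth // cat_take_drop.
transitivity (filter (r ^~ k) (take m s ++ k :: drop m.+1 s)); last by rewrite -E.
move: Hpw; rewrite {1}E pairwise_cat => /and3P[Ha _ /= /andP[Hk _]].
rewrite filter_cat /= Hirr.
have -> : [seq x <- take m s | r x k] = take m s.
  apply/all_filterP; apply/allP => y Hy.
  by move/allrelP: Ha => /(_ y k Hy); rewrite mem_head => /(_ isT).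
rewrite (@eq_in_filter _ _ pred0) ?filter_pred0 ?cats0 // => y Hy.
by apply: Has; exact: (allP Hk y Hy).
Qed.

Lemma take_ord L B m : m < size (ord L B) ->
  take m (ord L B) = filter (ltk L B ^~ (nth 0 (ord L B) m)) (ord L B).
Proof.
apply: take_pairwise; [exact: ltk_irr|exact: ltk_asym|].
by rewrite -sorted_pairwise; [exact: ord_sorted|exact: ltk_trans].
Qed.

Lemma ltk_wr L B j k : wrt (nth e0 L j) -> ltk L B j k = (j < Wk L B k).
Proof.
rewrite /ltk /ckey /Wk => ->; case: (wrt (nth e0 L k)); apply/idP/idP; lia.
Qed.

Definition po_hyp (L : seq entry) (B : nat -> nat) :=
  (forall k, k < size L -> B k <= k) /\
  (forall j k, j < k -> k < size L ->
     (ce_tid (nth e0 L j)).1 = (ce_tid (nth e0 L k)).1 -> j < B k).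

Lemma ltk_po1 L B j k : po_hyp L B -> j < k -> k < size L ->
  (ce_tid (nth e0 L j)).1 = (ce_tid (nth e0 L k)).1 -> ltk L B j k.
Proof.
case=> HB Hpo Hjk Hk Hs.
have H1 := Hpo j k Hjk Hk Hs; have H2 := HB j (ltn_trans Hjk Hk).
rewrite /ltk /ckey; case: (wrt (nth e0 L j)); case: (wrt (nth e0 L k)); lia.
Qed.

Lemma ltk_po L B j k : po_hyp L B -> j < size L -> k < size L ->
  (ce_tid (nth e0 L j)).1 = (ce_tid (nth e0 L k)).1 -> ltk L B j k = (j < k).
Proof.
move=> HH Hj Hk Hs; case: (ltngtP j k) => H.
- exact: ltk_po1.
- by apply: ltk_asym; apply: ltk_po1.
- by rewrite H ltk_irr.
Qed.

Lemma filter_iota_lt w n : w <= n -> [seq j <- iota 0 n | j < w] = iota 0 w.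
Proof.
move=> H; rewrite -(subnKC H) iotaD filter_cat add0n.
rewrite (_ : [seq j <- iota 0 w | j < w] = iota 0 w); last first.
  by apply/all_filterP/allP => j; rewrite mem_iota.
rewrite (@eq_in_filter _ _ pred0) ?filter_pred0 ?cats0 // => j.
by rewrite mem_iota => /andP[H1 _] /=; rewrite ltnNge H1.
Qed.

Lemma filter_swap (T : Type) (a b : pred T) s :
  filter a (filter b s) = filter b (filter a s).
Proof. by rewrite -!filter_predI; apply: eq_filter => x /=; rewrite andbC. Qed.

Lemma writers_ord L B : [seq j <- ord L B | wrt (nth e0 L j)] =
  [seq j <- iota 0 (size L) | wrt (nth e0 L j)].
Proof.
apply: (irr_sorted_eq ltn_trans ltnn).
- apply: (sub_in_sorted (P := [pred j | wrt (nth e0 L j)]) (e := ltk L B)).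
  + by move=> j k; rewrite !inE => Hj Hk; rewrite ltk_wr // /Wk Hk.
  + exact: filter_all.
  + by apply: sorted_filter; [exact: ltk_trans | exact: ord_sorted].
- by apply: sorted_filter; [exact: ltn_trans | exact: iota_ltn_sorted].
- by move=> j; rewrite !mem_filter (perm_mem (ord_perm L B)).
Qed.

Lemma size_ord L B : size (ord L B) = size L.
Proof. by rewrite /ord size_sort size_iota. Qed.

Lemma ord_nth_lt L B m : m < size L -> nth 0 (ord L B) m < size L.
Proof.
move=> Hm; have : nth 0 (ord L B) m \in ord L B by rewrite mem_nth // size_ord.
by rewrite (perm_mem (ord_perm L B)) mem_iota.
Qed.

Lemma Lp_nth L B m : m < size L ->
  nth e0 (map (nth e0 L) (ord L B)) m = nth e0 L (nth 0 (ord L B) m).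
Proof. by move=> Hm; rewrite (nth_map 0) // size_ord. Qed.

Lemma take_Lp L B m : m < size L ->
  take m (map (nth e0 L) (ord L B)) =
  map (nth e0 L) (filter (ltk L B ^~ (nth 0 (ord L B) m)) (ord L B)).
Proof. by move=> Hm; rewrite -map_take take_ord // size_ord. Qed.

Lemma writers_prefix L B m : po_hyp L B -> m < size L ->
  filter wrt (take m (map (nth e0 L) (ord L B))) =
  filter wrt (take (Wk L B (nth 0 (ord L B) m)) L).
Proof.
move=> HH Hm; set k := nth 0 (ord L B) m.
have Hk : k < size L by apply: ord_nth_lt.
have HW : Wk L B k <= size L.
  rewrite /Wk; case: (wrt _); first exact: ltnW.
  by apply: leq_trans (ltnW Hk); case: HH => HB _; apply: HB.
rewrite take_Lp // filter_map filter_swap /preim writers_ord.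
rewrite (@eq_in_filter _ _ (fun j => j < Wk L B k)); last first.
  by move=> j; rewrite mem_filter => /andP[Hw _]; rewrite ltk_wr.
rewrite filter_swap filter_iota_lt // -filter_map map_nth_iota0 //.
Qed.

Lemma writers_all L B :
  filter wrt (map (nth e0 L) (ord L B)) = filter wrt L.
Proof.
by rewrite filter_map /preim writers_ord -filter_map map_nth_iota0 // take_size.
Qed.

Lemma perm_Lp L B : perm_eq (map ce_tid (map (nth e0 L) (ord L B))) (map ce_tid L).
Proof.
rewrite -map_comp; apply: perm_trans (perm_map _ (ord_perm L B)) _.
by rewrite map_comp (map_nth_iota0 e0) // take_size.
Qed.

Lemma count_prefix L B m p : po_hyp L B -> m < size L ->
  (ce_tid (nth e0 L (nth 0 (ord L B) m))).1 = p ->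
  count (isp p) (take m (map (nth e0 L) (ord L B))) =
  count (isp p) (take (nth 0 (ord L B) m) L).
Proof.
move=> HH Hm; set k := nth 0 (ord L B) m => Hp.
have Hk : k < size L by apply: ord_nth_lt.
rewrite take_Lp // count_map count_filter (permP (ord_perm L B)).
rewrite (@eq_in_count _ _ (predI (preim (nth e0 L) (isp p)) (fun j => j < k))); last first.
  move=> j; rewrite mem_iota /= => Hj.
  case E: (isp p (nth e0 L j)) => //=.
  by apply: ltk_po => //; move/eqP: E; rewrite Hp.
rewrite -count_filter filter_iota_lt ?(ltnW Hk) //.
by rewrite -count_map map_nth_iota0 // ltnW.
Qed.


Lemma pos_in_cons e s t : pos_in (e :: s) t = if ce_tid e == t then 0 else (pos_in s t).+1.
Proof. by []. Qed.

Lemma tid_filter_sub (a : pred entry) s t :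
  t \in map ce_tid (filter a s) -> t \in map ce_tid s.
Proof.
elim: s => [|e s IH] //=; case: (a e) => /=; rewrite ?in_cons.
  by case/orP=> [->|/IH ->]; rewrite ?orbT.
by move/IH ->; rewrite orbT.
Qed.

Lemma pos_filter (a : pred entry) s t1 t2 : uniq (map ce_tid s) ->
  t1 \in map ce_tid (filter a s) -> t2 \in map ce_tid (filter a s) ->
  (pos_in s t1 < pos_in s t2) = (pos_in (filter a s) t1 < pos_in (filter a s) t2).
Proof.
elim: s => [|e s IH] //= /andP[Hn Hu].
have sub := @tid_filter_sub a s.
case Ha: (a e).
- rewrite !pos_in_cons map_cons !in_cons.
  case E1: (ce_tid e == t1); case E2: (ce_tid e == t2) => //= H1 H2.
  rewrite !ltnS; apply: IH => //.
    by move: H1; rewrite eq_sym E1.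
  by move: H2; rewrite eq_sym E2.
- move=> H1 H2.
  have -> : (ce_tid e == t1) = false.
    by apply/negbTE; apply: contraNneq Hn => ->; apply: sub.
  have -> : (ce_tid e == t2) = false.
    by apply/negbTE; apply: contraNneq Hn => ->; apply: sub.
  by rewrite ltnS; apply: IH.
Qed.

Lemma find_entry_ex s t e : find_entry s t = Some e ->
  exists j, j < size s /\ nth e0 s j = e /\ ce_tid e = t.
Proof.
rewrite /find_entry; elim: s => [|e' s IH] //=; case: eqP => [<-|_] /=.
  by case=> <-; exists 0.
by move/IH => [j [H1 [H2 H3]]]; exists j.+1.
Qed.

Lemma tid_in_filter (a : pred entry) s j : j < size s -> a (nth e0 s j) ->
  ce_tid (nth e0 s j) \in map ce_tid (filter a s).
Proof.
elim: s j => [|e s IH] [|j] //=.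
  by move=> _ ->; rewrite /= mem_head.
move=> Hj Ha; case: (a e); rewrite /= ?in_cons (IH j) ?orbT //.
Qed.

Lemma perm_small (s1 s2 : seq nat) : perm_eq s1 s2 -> size s2 <= 1 -> s1 = s2.
Proof.
move=> Hp Hs; have Hsz := perm_size Hp.
case: s2 Hs Hp Hsz => [|y [|z s2]] //=.
  by case: s1.
case: s1 => [|x [|x' s1]] // _ Hp _.
by have := perm_mem Hp x; rewrite !inE eqxx => /esym/eqP ->.
Qed.

Lemma find_entry_Lp L B t : uniq (map ce_tid L) ->
  find_entry (map (nth e0 L) (ord L B)) t = find_entry L t.
Proof.
move=> Hu; rewrite /find_entry filter_map.
set P := preim _ _.
have E : [seq j <- ord L B | P j] = [seq j <- iota 0 (size L) | P j].
  apply: perm_small; first by apply: perm_filter; exact: ord_perm.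
  rewrite size_filter.
  have -> : count P (iota 0 (size L)) = count_mem t (map ce_tid L).
    by rewrite -{2}(take_size L) -(map_nth_iota0 e0) // -map_comp count_map.
  by rewrite count_uniq_mem //; case: (_ \in _).
rewrite E /P; transitivity (ohead (filter (fun e => ce_tid e == t)
   (map (nth e0 L) (iota 0 (size L))))); first by rewrite filter_map.
by rewrite (map_nth_iota0 e0) // take_size.
Qed.

Lemma wx_tid L x t : uniq (map ce_tid L) -> wx L x t ->
  t \in map ce_tid (filter wrt L).
Proof.
rewrite /wx; case E: (find_entry L t) => [e|] // Hu Hw.
have [j [Hj [He Ht]]] := find_entry_ex E.
rewrite -Ht -He; apply: tid_in_filter => //.
by rewrite He /wrt; move: Hw; rewrite /writes_var; case: (ce_writes e).
Qed.

Lemma trace_Lp L B s s' : uniq (map ce_tid L) -> st_log s = L ->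
  st_log s' = map (nth e0 L) (ord L B) -> trace_of s' = trace_of s.
Proof.
move=> Hu HL HL'; rewrite /trace_of HL HL'.
set L' := map (nth e0 L) (ord L B).
have Hp : perm_eq (map ce_tid L') (map ce_tid L) by apply: perm_Lp.
have Hu' : uniq (map ce_tid L') by rewrite (perm_uniq Hp).
have Hc : committed L' = committed L.
  by apply: functional_extensionality => t; rewrite /committed (perm_mem Hp).
have Hf : find_entry L' = find_entry L.
  by apply: functional_extensionality => t; apply: find_entry_Lp.
have Hwx : wx L' = wx L by rewrite /wx Hf.
have Hww : ww_of L' = ww_of L.
  apply: functional_extensionality => x; apply: functional_extensionality => t1.
  apply: functional_extensionality => t2.
  rewrite /ww_of Hwx; case E1: (wx L x t1); case E2: (wx L x t2) => //=.
  have H1 := wx_tid Hu E1; have H2 := wx_tid Hu E2.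
  rewrite (@pos_filter wrt L' t1 t2 Hu') ?writers_all // (@pos_filter wrt L t1 t2 Hu) //.
have Hev : ev_of L' = ev_of L by rewrite /ev_of Hf.
have Hpo : po_of L' = po_of L by rewrite /po_of Hc.
have Hwr : wr_of L' = wr_of L by rewrite /wr_of Hf.
have Hrw : rw_of L' = rw_of L by rewrite /rw_of Hwx Hf Hww.
by rewrite Hc Hev Hpo Hwr Hww Hrw.
Qed.


Definition allok P L B RO := forall k, k < size L -> entry_ok P L B RO k (nth e0 L k).

Lemma count_take_le (a : pred entry) n s : count a (take n s) <= count a s.
Proof. by rewrite -{2}(cat_take_drop n s) count_cat leq_addr. Qed.

Lemma uniq_tids P L B RO : allok P L B RO -> uniq (map ce_tid L).
Proof.
move=> HE; case: (boolP (uniq _)) => // /(uniqPn (0,0)) [i [j [Hij Hj]]].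
rewrite size_map in Hj; have Hi := ltn_trans Hij Hj.
rewrite !(nth_map e0) // => Heq.
have [_ _ Ei _ _ _ _] := HE i Hi; have [_ _ Ej _ _ _ _] := HE j Hj.
move: Ei Ej; rewrite Heq => Ei Ej.
set p := (ce_tid (nth e0 L j)).1 in Ei Ej.
have Hpi : isp p (nth e0 L i) by rewrite /isp Heq.
have : count (isp p) (take i.+1 L) <= count (isp p) (take j L).
  by rewrite -(take_takel L Hij) count_take_le.
by rewrite (take_nth e0 Hi) -cats1 count_cat /= Hpi -Ei -Ej addn1 ltnn.
Qed.

Lemma po_inv P L B RO : allok P L B RO -> po_hyp L B.
Proof.
move=> HE; split.
  by move=> k Hk; have [] := HE k Hk.
move=> j k Hjk Hk Hs; have [_ _ _ _ H5 _ _] := HE k Hk.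
by apply: H5 => //; rewrite /isp Hs.
Qed.

Definition HWprop P L B RO := forall k, k < size L ->
  run (tx P (ce_tid (nth e0 L k))) (prevregs RO (ce_tid (nth e0 L k)))
    (mem_of (take (Wk L B k) L)) (last_writer (take (Wk L B k) L)) [::] [::] [::]
  = Some (RO (ce_tid (nth e0 L k)), ce_writes (nth e0 L k), ce_events (nth e0 L k),
          ce_rf (nth e0 L k)).

Lemma ser_ok_Lp P L B RO : allok P L B RO -> HWprop P L B RO ->
  ser_ok P (map (nth e0 L) (ord L B)) RO.
Proof.
move=> HE HW m; rewrite size_map size_ord => Hm.
have HH := po_inv HE.
rewrite Lp_nth //; set k := nth 0 (ord L B) m.
have Hk : k < size L by apply: ord_nth_lt.
have [H1 H2 H3 _ _ _ _] := HE k Hk.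
split => //.
  by rewrite (count_prefix HH Hm erefl) -/k.
have -> : mem_of (take m (map (nth e0 L) (ord L B))) = mem_of (take (Wk L B k) L).
  apply: functional_extensionality => x.
  by rewrite mem_of_filter (writers_prefix HH Hm) -mem_of_filter.
have -> : last_writer (take m (map (nth e0 L) (ord L B))) = last_writer (take (Wk L B k) L).
  apply: functional_extensionality => x.
  by rewrite last_writer_filter (writers_prefix HH Hm) -last_writer_filter.
exact: HW.
Qed.

Lemma HW_b P L B RO : allok P L B RO -> all_tx P single_var_tx -> HWprop P L B RO.
Proof.
move=> HE Hsv k Hk; have [H1 H2 _ H4 _ H6 H7] := HE k Hk.
rewrite /Wk; case Hw: (wrt (nth e0 L k)); last exact: H6.
have [x Hx] := Hsv _ _ H1 H2.
have Hws : all (fun p => p.1 == x) (ce_writes (nth e0 L k)).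
  by apply: (run_ws_var H6) => //; exact: Hx.
have Hxin : x \in map fst (ce_writes (nth e0 L k)).
  move: Hw Hws; rewrite /wrt; case: (ce_writes _) => [|[y v] ws] //= _.
  by case/andP=> /eqP -> _; rewrite mem_head.
have Hnw : all (fun e' => ~~ writes_var e' x) (drop (B k) (take k L)).
  by apply: sub_all H7 => e' /allP; apply.
have E : take k L = take (B k) L ++ drop (B k) (take k L).
  by rewrite -{1}(cat_take_drop (B k) (take k L)) take_takel.
have [Em El] := mem_of_cat_nw (take (B k) L) Hnw.
rewrite E -H6; apply: (run_dep (x:=x)); [exact: Hx | exact: Em | exact: El].
Qed.

Lemma HW_c P L B RO x : allok P L B RO -> all_tx P (writes_to x) -> HWprop P L B RO.
Proof.
move=> HE Hwt.
have Hxw : forall k, k < size L -> x \in map fst (ce_writes (nth e0 L k)).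
  move=> k Hk; have [H1 H2 _ _ _ H6 _] := HE k Hk.
  by apply: (run_ws_mono H6); apply/orP; right; exact: Hwt _ _ H1 H2.
move=> k Hk; have [H1 H2 _ H4 _ H6 H7] := HE k Hk.
have Hw : wrt (nth e0 L k) by move: (Hxw k Hk); rewrite /wrt; case: (ce_writes _).
rewrite /Wk Hw.
have EB : B k = k.
  case: (ltngtP (B k) k) H4 => // Hlt _.
  have Hsz : B k < size (take k L) by rewrite size_takel // ltnW.
  move: H7; rewrite (drop_nth e0 Hsz) /= => /andP[Hh _].
  rewrite nth_take // in Hh.
  have := allP Hh x (Hxw k Hk).
  by rewrite /writes_var Hxw // (ltn_trans Hlt Hk).
by rewrite EB in H6.
Qed.

Unset Implicit Arguments.

Theorem corollary2 (P : program) :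
  (all_tx P single_rw_instr \/
   all_tx P single_var_tx \/
   (exists x : var, all_tx P (writes_to x))) ->
  robust_SI P.
Proof.
move=> H T; split.
- case=> ls [s [Hsi Htr]].
  have [B [RO [HE _]]] := INV_steps (INV_init P) Hsi.
  have Hu := uniq_tids HE.
  have HW : HWprop P (st_log s) B RO.
    case: H => [Ha|[Hb|[x Hc]]].
    + apply: HW_b => // p i Hp Hi; move: (Ha p i Hp Hi).
      case: (nth [::] (nth [::] P p) i) => [|[r y|y e|b] [|? ?]] //= _;
        by exists y; rewrite /= eqxx.
    + exact: HW_b.
    + exact: HW_c Hc.
  have [ls' [s' [Hser Hlog]]] := ser_exists (ser_ok_Lp HE HW).
  exists ls', s'; split => //; rewrite -Htr; exact: trace_Lp Hu erefl Hlog.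
- by case=> ls [s [[Hsi _] Htr]]; exists ls, s.
Qed.
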